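(* If $G$ is a countably infinite ME-homogeneous graph, then its complement $\overline{G}$ is MH-homogeneous.
   Context: All graphs are undirected and loopless; subgraphs are induced. A monomorphism is an injective map sending adjacent vertices to adjacent vertices. $G$ is ME-homogeneous if every monomorphism between finite induced subgraphs of $G$ is the restriction of a surjective endomorphism of $G$; $G$ is MH-homogeneous if every monomorphism between finite induced subgraphs of $G$ is the restriction of an endomorphism of $G$. *)

(* Defs.v *)
From Stdlib Require Import List.

Record graph (V : Type) : Type := Graph {
  adj : V -> V -> Prop;
  adj_sym : forall x y, adj x y -> adj y x;
  adj_irrefl : forall x, ~ adj x x
}.
Arguments adj {V} g x y.

Definition countably_infinite (V : Type) : Prop :=
  exists (e : nat -> V), (forall m n, e m = e n -> m = n) /\ (forall v, exists n, e n = v).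

Definition finite_set {V : Type} (A : V -> Prop) : Prop :=
  exists l : list V, forall x, A x <-> In x l.

Definition complement {V : Type} (G : graph V) : graph V.
Proof.
  refine (Graph V (fun x y => x <> y /\ ~ adj G x y) _ _).
  - intros x y [H1 H2]. split.
    + intros ->. apply H1; reflexivity.
    + intro H. apply H2. apply adj_sym. exact H.
  - intros x [H _]. apply H; reflexivity.
Defined.

Definition is_mono_between {V : Type} (G : graph V) (A B : V -> Prop) (f : V -> V) : Prop :=
  (forall x, A x -> B (f x)) /\
  (forall x y, A x -> A y -> f x = f y -> x = y) /\
  (forall x y, A x -> A y -> adj G x y -> adj G (f x) (f y)).

Definition is_endo {V : Type} (G : graph V) (g : V -> V) : Prop :=
  forall x y, adj G x y -> adj G (g x) (g y).

Definition surjective {V : Type} (g : V -> V) : Prop := forall y, exists x, g x = y.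

Definition extends_on {V : Type} (A : V -> Prop) (f g : V -> V) : Prop :=
  forall x, A x -> g x = f x.

Definition ME_homogeneous {V : Type} (G : graph V) : Prop :=
  forall (A B : V -> Prop) (f : V -> V),
    finite_set A -> finite_set B -> is_mono_between G A B f ->
    exists g, is_endo G g /\ surjective g /\ extends_on A f g.

Definition MH_homogeneous {V : Type} (G : graph V) : Prop :=
  forall (A B : V -> Prop) (f : V -> V),
    finite_set A -> finite_set B -> is_mono_between G A B f ->
    exists g, is_endo G g /\ extends_on A f g.

(* Main.v *)
Require Import Defs.
From Stdlib Require Import List Classical ClassicalEpsilon.

Theorem theorem7p2 (V : Type) (G : graph V) :
  countably_infinite V -> ME_homogeneous G -> MH_homogeneous (complement G).
Proof.
  intros _ HME A B f [lA HA] _ [_ [Hinj Hadj]].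
  set (A' := fun y => exists x, A x /\ f x = y).
  pose (finv := fun y =>
    match excluded_middle_informative (exists x, A x /\ f x = y) with
    | left H => proj1_sig (constructive_indefinite_description _ H)
    | right _ => y
    end).
  assert (Hfinv : forall y, A' y -> A (finv y) /\ f (finv y) = y).
  { intros y Hy. unfold finv. destruct (excluded_middle_informative _) as [H|H].
    - destruct (constructive_indefinite_description _ H) as [x Hx]. exact Hx.
    - contradiction. }
  destruct (HME A' A finv) as [h [Hh [Hsurj Hext]]].
  - exists (map f lA). intros y. split.
    + intros [x [Hx <-]]. apply in_map. apply HA. exact Hx.
    + intros Hy. apply in_map_iff in Hy. destruct Hy as [x [<- Hx]].
      exists x. split; [apply HA; exact Hx | reflexivity].
  - exists lA. exact HA.
  - split; [|split].
    + intros y Hy. apply Hfinv; exact Hy.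
    + intros y1 y2 H1 H2 E. destruct (Hfinv _ H1) as [_ E1].
      destruct (Hfinv _ H2) as [_ E2]. rewrite <- E1, <- E2, E. reflexivity.
    + intros y1 y2 H1 H2 E. destruct (Hfinv _ H1) as [A1 E1].
      destruct (Hfinv _ H2) as [A2 E2].
      apply NNPP. intro N.
      assert (Hne : finv y1 <> finv y2).
      { intro Q. apply (adj_irrefl _ G y2). rewrite <- E1, Q, E2 in E. exact E. }
      destruct (Hadj _ _ A1 A2 (conj Hne N)) as [_ N2].
      apply N2. rewrite E1, E2. exact E.
  - assert (Hex : forall v, exists x, h x = v /\ (A v -> x = f v)).
    { intro v. destruct (classic (A v)) as [Av|nAv].
      - exists (f v). split; [|auto].
        assert (A' (f v)) as Hv by (exists v; auto).
        rewrite (Hext _ Hv). destruct (Hfinv _ Hv) as [Ax Ex].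
        apply Hinj; auto.
      - destruct (Hsurj v) as [x Hx]. exists x. split; [exact Hx | intro; contradiction]. }
    pose (g := fun v => proj1_sig (constructive_indefinite_description _ (Hex v))).
    assert (Hg : forall v, h (g v) = v /\ (A v -> g v = f v)).
    { intro v. exact (proj2_sig (constructive_indefinite_description _ (Hex v))). }
    exists g. split.
    + intros v w [Hne Hn]. simpl. split.
      * intro Q. apply Hne. rewrite <- (proj1 (Hg v)), <- (proj1 (Hg w)), Q. reflexivity.
      * intro Q. apply Hn. rewrite <- (proj1 (Hg v)), <- (proj1 (Hg w)). apply Hh. exact Q.
    + intros v Av. apply (proj2 (Hg v)). exact Av.
Qed.
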